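(* Assume $q\neq0$. For all integers $n$ and $k$, $$h_{n+k+1}^2-q^{2k+1}h_{n-k}^2=d^2u_{2k+1}\left[\left(b^2-a^2q\right)u_{2n+1}-aq\left(2b-ap\right)u_{2n}\right].$$
   Context: Let $p,q,a,b$ be complex numbers with $q\neq0$, and let $d^2=p^2-4q$. The sequence $(u_n)$ is defined by $u_0=0$, $u_1=1$, $u_n=pu_{n-1}-qu_{n-2}$. The Horadam-Lucas sequence $(h_n)$ is defined by $h_0=2b-ap$, $h_1=bp-2aq$, $h_n=ph_{n-1}-qh_{n-2}$. Both are extended to all integer indices by $x_{n-2}=(px_{n-1}-x_n)/q$. *)

(* Defs.v *)
From HB Require Import structures.
From mathcomp Require Import all_boot all_order all_algebra.
From mathcomp Require Import complex.
From mathcomp Require Import Rstruct.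
From Stdlib Require Import Rdefinitions.
Set Implicit Arguments. Unset Strict Implicit. Unset Printing Implicit Defensive.
Import Order.TTheory GRing.Theory Num.Theory.
Local Open Scope ring_scope.

Notation C := (complex Rdefinitions.R).

(* Forward iteration: fwd n = (x_n, x_{n+1}) for x_n = p x_{n-1} - q x_{n-2}. *)
Fixpoint fwd (p q x0 x1 : C) (n : nat) : C * C :=
  match n with
  | 0%N => (x0, x1)
  | m.+1 => let xy := fwd p q x0 x1 m in (xy.2, p * xy.2 - q * xy.1)
  end.

(* Backward iteration: bwd n = (x_{-n}, x_{-n+1}) for x_{n-2} = (p x_{n-1} - x_n)/q. *)
Fixpoint bwd (p q x0 x1 : C) (n : nat) : C * C :=
  match n with
  | 0%N => (x0, x1)
  | m.+1 => let xy := bwd p q x0 x1 m in ((p * xy.1 - xy.2) / q, xy.1)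
  end.

Definition lucas_seq (p q x0 x1 : C) (n : int) : C :=
  match n with
  | Posz m => (fwd p q x0 x1 m).1
  | Negz m => (bwd p q x0 x1 m.+1).1
  end.

Definition useq (p q : C) : int -> C := lucas_seq p q 0 1.

Definition hseq (p q a b : C) : int -> C :=
  lucas_seq p q (2 * b - a * p) (b * p - 2 * a * q).

(* Main.v *)
Require Import Defs.
From mathcomp Require Import all_boot all_order all_algebra complex Rstruct.
From mathcomp Require Import ring.
Import GRing.Theory.
Local Open Scope ring_scope.
Set Implicit Arguments. Unset Strict Implicit.

Section S.
Variables (p q : C) (hq : q != 0).

Lemma L_bwd1 x0 x1 (j : nat) : (bwd p q x0 x1 j).1 = lucas_seq p q x0 x1 (- j%:Z).
Proof. by case: j. Qed.

Lemma L_bwd2 x0 x1 (j : nat) : (bwd p q x0 x1 j).2 = lucas_seq p q x0 x1 (1 - j%:Z).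
Proof.
case: j => [//|i] /=; rewrite L_bwd1; congr lucas_seq; ring.
Qed.

Definition rec2 (P Q : C) (f : int -> C) := forall n, f (n + 2) = P * f (n + 1) - Q * f n.

Lemma lucas_rec x0 x1 : rec2 p q (lucas_seq p q x0 x1).
Proof.
move=> [m|j].
- rewrite -!PoszD !addnS !addn0 /=. done.
- rewrite NegzE.
  have E1 : - (j.+1)%:Z + 2 = 1 - j%:Z by rewrite -addn1 PoszD; ring.
  have E2 : - (j.+1)%:Z + 1 = - j%:Z by rewrite -addn1 PoszD; ring.
  rewrite E1 E2 -NegzE /= L_bwd1 L_bwd2.
  field. done.
Qed.

Definition rec3 (f : int -> C) := forall n,
  f (n + 3) = (p^+2 - q) * f (n + 2) - (p^+2 * q - q^+2) * f (n + 1) + q^+3 * f n.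

Lemma rec3_ext f g : (forall k, f k = g k) -> rec3 f -> rec3 g.
Proof. by move=> E R n; rewrite -!E R. Qed.

Lemma rec3_sub f g : rec3 f -> rec3 g -> rec3 (fun k => f k - g k).
Proof. by move=> F G n; rewrite F G; ring. Qed.

Lemma rec3_scale c f : rec3 f -> rec3 (fun k => c * f k).
Proof. by move=> F n; rewrite F; ring. Qed.

Lemma rec2_shift P Q a f : rec2 P Q f -> rec2 P Q (fun k => f (a + k)).
Proof. move=> F n /=; have := F (a + n); rewrite -!addrA; exact. Qed.

Lemma rec2_prod f g : rec2 p q f -> rec2 p q g -> rec3 (fun k => f k * g k).
Proof.
move=> F G n /=.
have E3 : n + 3 = (n + 1) + 2 by rewrite -addrA.
have E2 : (n + 1) + 1 = n + 2 by rewrite -addrA.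
rewrite E3 F G E2 !F !G; ring.
Qed.

Lemma rec2_even c f : rec2 p q f -> rec2 (p^+2 - 2 * q) (q^+2) (fun k => f (2 * k + c)).
Proof.
move=> F n /=.
have E1 : 2 * (n + 2) + c = (2 * n + c + 2) + 2 by ring.
have E2 : 2 * (n + 1) + c = 2 * n + c + 2 by ring.
set m := 2 * n + c.
have E3 : m + 2 + 1 = (m + 1) + 2 by rewrite -!addrA.
have E4 : m + 1 + 1 = m + 2 by rewrite -addrA.
rewrite E1 E2 F E3 F E4 F; ring.
Qed.

Lemma rec2_rec3 g : rec2 (p^+2 - 2 * q) (q^+2) g -> rec3 g.
Proof.
move=> G n /=.
have E3 : n + 3 = (n + 1) + 2 by rewrite -addrA.
have E2 : (n + 1) + 1 = n + 2 by rewrite -addrA.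
rewrite E3 G E2 !G; ring.
Qed.

Lemma rec2_neg a f : rec2 p q f -> rec2 p q (fun k => q ^ k * f (a - k)).
Proof.
move=> F n /=.
have uq : q \is a GRing.unit by rewrite unitfE.
have E := F (a - n - 2).
have E1 : a - n - 2 + 2 = a - n by ring.
have E2 : a - n - 2 + 1 = a - (n + 1) by ring.
have E3 : a - (n + 2) = a - n - 2 by ring.
rewrite E1 E2 in E.
rewrite E3 !exprzDr // E.

rewrite expr1z.
move: (q ^ n) => Z; ring.
Qed.

Lemma rec3_zero f : rec3 f -> f 0 = 0 -> f 1 = 0 -> f 2 = 0 -> forall n, f n = 0.
Proof.
move=> F f0 f1 f2.
have q3 : q ^+ 3 != 0 by rewrite expf_neq0.
have fw : forall m : nat, [/\ f m%:Z = 0, f (m%:Z + 1) = 0 & f (m%:Z + 2) = 0].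
  elim=> [|m [a b c]]; first by split.
  have S1 : (m.+1)%:Z = m%:Z + 1 by rewrite -addn1 PoszD.
  have S2 : m%:Z + 1 + 1 = m%:Z + 2 by rewrite -addrA.
  have S3 : m%:Z + 1 + 2 = m%:Z + 3 by rewrite -addrA.
  rewrite S1 S2 S3 F a b c !mulr0 subr0 addr0; by split.
have bw : forall m : nat, [/\ f (- m%:Z) = 0, f (- m%:Z + 1) = 0 & f (- m%:Z + 2) = 0].
  elim=> [|m [a b c]]; first by rewrite oppr0 !add0r; split.
  have Fm := F (- (m.+1)%:Z).
  have S1 : - (m.+1)%:Z = - m%:Z - 1 by rewrite -addn1 PoszD opprD.
  have E3 : - m%:Z - 1 + 3 = - m%:Z + 2 by rewrite -addrA.
  have E2 : - m%:Z - 1 + 2 = - m%:Z + 1 by rewrite -addrA.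
  have E1 : - m%:Z - 1 + 1 = - m%:Z by rewrite subrK.
  rewrite S1 E3 E2 E1 c b a !mulr0 subr0 add0r in Fm.
  rewrite S1 E2 E1 a b; split => //.
  by move/eqP: Fm; rewrite eq_sym mulf_eq0 (negbTE q3) => /eqP.
move=> [m|j]; first by case: (fw m).
rewrite NegzE; by case: (bw j.+1).
Qed.

End S.
Lemma base (p q a b : C) (hq : q != 0) (n0 k0 : nat) : (n0 < 3)%N -> (k0 < 3)%N ->
  let n := n0%:Z in let k := k0%:Z in
  hseq p q a b (n + k + 1) ^+ 2
    - q ^ (2 * k + 1) * hseq p q a b (n - k) ^+ 2
  = (p ^+ 2 - 4 * q) * useq p q (2 * k + 1)
    * ((b ^+ 2 - a ^+ 2 * q) * useq p q (2 * n + 1)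
       - a * q * (2 * b - a * p) * useq p q (2 * n)).
Proof.
move=> hn hk n k.
have -> : 2 * k + 1 = Posz (k0.*2.+1) by rewrite /k -[in RHS]addn1 PoszD -mul2n PoszM.
rewrite /n /k.
case: n0 hn {n} => [|[|[|//]]] _; case: k0 hk {k} => [|[|[|//]]] _;
rewrite /hseq /useq /lucas_seq /=; field; rewrite ?hq //.
Qed.

Theorem mainTheorem15 (p q a b : C) (hq : q != 0) (n k : int) :
  hseq p q a b (n + k + 1) ^+ 2
    - q ^ (2 * k + 1) * hseq p q a b (n - k) ^+ 2
  = (p ^+ 2 - 4 * q) * useq p q (2 * k + 1)
    * ((b ^+ 2 - a ^+ 2 * q) * useq p q (2 * n + 1)
       - a * q * (2 * b - a * p) * useq p q (2 * n)).
Proof.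
set h := hseq p q a b.
set u := useq p q.
have Rh : rec2 p q h by apply: lucas_rec.
have Ru : rec2 p q u by apply: lucas_rec.
have uq : q \is a GRing.unit by rewrite unitfE.
pose G (n k : int) := h (n + k + 1) ^+ 2 - q ^ (2 * k + 1) * h (n - k) ^+ 2
  - (p ^+ 2 - 4 * q) * u (2 * k + 1)
    * ((b ^+ 2 - a ^+ 2 * q) * u (2 * n + 1) - a * q * (2 * b - a * p) * u (2 * n)).
suff : G n k = 0 by move/eqP; rewrite subr_eq0 => /eqP.
have Rn : forall k, rec3 p q (fun n => G n k).
  move=> k0.
  pose c1 := (p ^+ 2 - 4 * q) * u (2 * k0 + 1) * (b ^+ 2 - a ^+ 2 * q).
  pose c2 := (p ^+ 2 - 4 * q) * u (2 * k0 + 1) * (a * q * (2 * b - a * p)).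
  apply: (@rec3_ext _ _ (fun n => (h ((k0 + 1) + n) * h ((k0 + 1) + n)
        - q ^ (2 * k0 + 1) * (h (- k0 + n) * h (- k0 + n)))
        - (c1 * u (2 * n + 1) - c2 * u (2 * n + 0)))).
    move=> n0; rewrite /G /c1 /c2 addr0.
    have -> : k0 + 1 + n0 = n0 + k0 + 1 by ring.
    have -> : - k0 + n0 = n0 - k0 by ring.
    move: (q ^ (2 * k0 + 1)) => Z; ring.
  apply: rec3_sub; apply: rec3_sub.
  - by apply: rec2_prod; apply: rec2_shift.
  - by apply: rec3_scale; apply: rec2_prod; apply: rec2_shift.
  - by apply: rec3_scale; apply: rec2_rec3; apply: rec2_even.
  - by apply: rec3_scale; apply: rec2_rec3; apply: rec2_even.
have Rk : forall n, rec3 p q (fun k => G n k).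
  move=> n0.
  pose c := (p ^+ 2 - 4 * q) * ((b ^+ 2 - a ^+ 2 * q) * u (2 * n0 + 1) - a * q * (2 * b - a * p) * u (2 * n0)).
  apply: (@rec3_ext _ _ (fun k => (h ((n0 + 1) + k) * h ((n0 + 1) + k)
        - q * ((q ^ k * h (n0 - k)) * (q ^ k * h (n0 - k))))
        - c * u (2 * k + 1))).
    move=> k0; rewrite /G /c.
    have -> : n0 + 1 + k0 = n0 + k0 + 1 by ring.
    have -> : 2 * k0 + 1 = k0 + k0 + 1 by ring.
    rewrite !exprzDr // expr1z.
    move: (q ^ k0) => Z; ring.
  apply: rec3_sub; first apply: rec3_sub.
  - by apply: rec2_prod; apply: rec2_shift.
  - by apply: rec3_scale; apply: rec2_prod; apply: rec2_neg.
  - by apply: rec3_scale; apply: rec2_rec3; apply: rec2_even.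
have B : forall n0 k0 : nat, (n0 < 3)%N -> (k0 < 3)%N -> G n0 k0 = 0.
  move=> n0 k0 hn hk; apply/eqP; rewrite /G subr_eq0; apply/eqP.
  exact: base.
have K3 : forall k0 : nat, (k0 < 3)%N -> forall n, G n k0 = 0.
  move=> k0 hk; apply: (rec3_zero hq (Rn k0)); exact: B.
apply: (rec3_zero hq (Rk n)); apply: K3 => //.
Qed.
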